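(* Let $E$ be a Banach $f$-algebra with order continuous norm and with a weak order unit $e$, and let $(x_\alpha)_{\alpha\in A}$ be a decreasing net in $E_+$. Then $x_\alpha\xrightarrow{mw}0$ if and only if $x_\alpha e\to0$ weakly.
   Context: All vector lattices are real and Archimedean. An $f$-algebra is a vector lattice with an associative multiplication making it an algebra, such that products of positive elements are positive and $x\wedge y=0$ implies $(xz)\wedge y=(zx)\wedge y=0$ for all $z\ge0$. A Banach $f$-algebra is an $f$-algebra which is a Banach lattice with $\|xy\|\le\|x\|\|y\|$. A net $(x_\alpha)$ in $E$ $mw$-converges to $x$ ($x_\alpha\xrightarrow{mw}x$) if $|x_\alpha-x|u\to0$ weakly for every $u\in E_+$. A weak order unit is an element $e>0$ whose generated band is all of $E$. *)

(* Defs.v *)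
From HB Require Import structures.
From mathcomp Require Import all_boot all_order all_algebra.
From mathcomp Require Import all_classical all_reals all_analysis.
Set Implicit Arguments. Unset Strict Implicit. Unset Printing Implicit Defensive.
Import Order.TTheory GRing.Theory Num.Theory.
Import numFieldNormedType.Exports.
Local Open Scope ring_scope.
Local Open Scope classical_set_scope.

Section Defs.
Variables (R : realType) (E : completeNormedModType R).
Variables (le : E -> E -> Prop) (join : E -> E -> E) (mul : E -> E -> E).

Definition meet (x y : E) : E := - join (- x) (- y).
Definition labs (x : E) : E := join x (- x).

Definition is_vector_lattice : Prop :=
  [/\ (forall x, le x x) /\
      (forall x y, le x y -> le y x -> x = y) /\
      (forall x y z, le x y -> le y z -> le x z),
      (forall x y z, le x y -> le (x + z) (y + z)),
      (forall (a : R) x y, 0 <= a -> le x y -> le (a *: x) (a *: y)) &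
      (forall x y z, [/\ le x (join x y), le y (join x y)
                     & (le x z -> le y z -> le (join x y) z)])].

Definition is_archimedean : Prop :=
  forall x y : E, le 0 x -> (forall n : nat, le (n%:R *: x) y) -> x = 0.

Definition is_f_algebra : Prop :=
  [/\ (forall x y z, mul (mul x y) z = mul x (mul y z)),
      (forall (a : R) x y z, mul (a *: x + y) z = a *: mul x z + mul y z),
      (forall (a : R) x y z, mul z (a *: x + y) = a *: mul z x + mul z y),
      (forall x y, le 0 x -> le 0 y -> le 0 (mul x y)) &
      (forall x y z, meet x y = 0 -> le 0 z ->
          meet (mul x z) y = 0 /\ meet (mul z x) y = 0)].

(* Banach f-algebra: complete (built into E), lattice norm, submultiplicative *)
Definition BanachFAlgebra : Prop :=
  [/\ is_vector_lattice, is_archimedean, is_f_algebra,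
      (forall x y, le (labs x) (labs y) -> `|x| <= `|y|) &
      (forall x y, `|mul x y| <= `|x| * `|y|)].

Definition directed (A : Type) (leA : A -> A -> Prop) : Prop :=
  [/\ inhabited A, (forall a, leA a a),
      (forall a b c, leA a b -> leA b c -> leA a c) &
      (forall a b, exists c, leA a c /\ leA b c)].

Definition net_cvg (A : Type) (leA : A -> A -> Prop) (u : A -> R) (l : R) :=
  forall eps : R, 0 < eps -> exists a0, forall a, leA a0 a -> `|u a - l| < eps.

Definition weak_cvg (A : Type) (leA : A -> A -> Prop) (x : A -> E) (l : E) :=
  forall f : E -> R,
    (forall (a : R) (y z : E), f (a *: y + z) = a * f y + f z) ->
    continuous f ->
    net_cvg leA (fun i => f (x i)) (f l).

Definition mw_cvg (A : Type) (leA : A -> A -> Prop) (x : A -> E) (l : E) :=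
  forall u, le 0 u -> weak_cvg leA (fun i => mul (labs (x i - l)) u) 0.

Definition decreasing_net (A : Type) (leA : A -> A -> Prop) (x : A -> E) :=
  forall a b, leA a b -> le (x b) (x a).

Definition net_decr_to_0 (A : Type) (leA : A -> A -> Prop) (x : A -> E) :=
  decreasing_net leA x /\
  (forall a, le 0 (x a)) /\
  (forall y, (forall a, le y (x a)) -> le y 0).

Definition order_continuous_norm : Prop :=
  forall (A : Type) (leA : A -> A -> Prop) (x : A -> E),
    directed leA -> net_decr_to_0 leA x -> net_cvg leA (fun a => `|x a|) 0.

Definition is_sup_of (D : set E) (s : E) :=
  (forall d, D d -> le d s) /\ (forall z, (forall d, D d -> le d z) -> le s z).

Definition is_band (B : set E) : Prop :=
  [/\ B 0, (forall (a : R) x y, B x -> B y -> B (a *: x + y)),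
      (forall x y, le (labs y) (labs x) -> B x -> B y) &
      (forall (D : set E) s, D `<=` B -> is_sup_of D s -> B s)].

(* e is a weak order unit: e > 0 and the band generated by e is E *)
Definition weak_order_unit (e : E) : Prop :=
  le 0 e /\ e <> 0 /\
  (forall B : set E, is_band B -> B e -> forall x, B x).

End Defs.

(* Main.v *)
Require Import Defs.
From HB Require Import structures.
From mathcomp Require Import all_boot all_order all_algebra.
From mathcomp Require Import all_classical all_reals all_analysis.
From mathcomp Require Import ring lra.
Import Order.TTheory GRing.Theory Num.Theory.
Import numFieldNormedType.Exports.
Local Open Scope ring_scope.

Set Implicit Arguments. Unset Strict Implicit. Unset Printing Implicit Defensive.


Section Lat.
Variables (R : realType) (E : completeNormedModType R).
Variables (le : E -> E -> Prop) (join : E -> E -> E).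
Hypothesis hVL : is_vector_lattice le join.

Lemma lrefl x : le x x.
Proof. by case: hVL => -[H _] _ _ _; apply: H. Qed.
Lemma lanti x y : le x y -> le y x -> x = y.
Proof. by case: hVL => -[_ [H _]] _ _ _; apply: H. Qed.
Lemma ltrans x y z : le x y -> le y z -> le x z.
Proof. by case: hVL => -[_ [_ H]] _ _ _; apply: H. Qed.
Lemma lD x y z : le x y -> le (x + z) (y + z).
Proof. by case: hVL => _ H _ _; apply: H. Qed.
Lemma lDl x y z : le x y -> le (z + x) (z + y).
Proof. by move=> /(lD z); rewrite ![_ + z]addrC. Qed.
Lemma lD2 a b c d : le a b -> le c d -> le (a + c) (b + d).
Proof. move=> h1 h2; apply: ltrans (lD c h1) (lDl b h2). Qed.
Lemma lN x y : le x y -> le (- y) (- x).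
Proof.
move=> /(lD (- x - y)).
by rewrite addrA addrN add0r addrCA addrN addr0.
Qed.
Lemma lNK x y : le (- y) (- x) -> le x y.
Proof. by move=> /lN; rewrite !opprK. Qed.
Lemma lsub x y : le x y <-> le 0 (y - x).
Proof.
split=> [H|H]; [have := lD (- x) H; rewrite addrN // | have := lD x H; by rewrite add0r addrNK].
Qed.
Lemma lsubr a b z : le (a + z) b <-> le a (b - z).
Proof.
split=> [H|H]; [have := lD (- z) H; rewrite addrK // | have := lD z H; by rewrite addrNK].
Qed.
Lemma lZ (a : R) x y : 0 <= a -> le x y -> le (a *: x) (a *: y).
Proof. by case: hVL => _ _ H _; apply: H. Qed.
Lemma lZ0 (a : R) x : 0 <= a -> le 0 x -> le 0 (a *: x).
Proof. by move=> ha /(lZ ha); rewrite scaler0. Qed.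
Lemma lZr (a b : R) x : a <= b -> le 0 x -> le (a *: x) (b *: x).
Proof.
move=> hab hx; apply/lsub; rewrite -scalerBl; apply: lZ0 => //.
by rewrite subr_ge0.
Qed.
Lemma jubl x y : le x (join x y).
Proof. by case: hVL => _ _ _ /(_ x y x) []. Qed.
Lemma jubr x y : le y (join x y).
Proof. by case: hVL => _ _ _ /(_ x y x) []. Qed.
Lemma jlub x y z : le x z -> le y z -> le (join x y) z.
Proof. by case: hVL => _ _ _ /(_ x y z) []. Qed.
Lemma jC x y : join x y = join y x.
Proof. by apply: lanti; apply: jlub; [apply: jubr|apply: jubl|apply: jubr|apply: jubl]. Qed.
Lemma jmono x x' y y' : le x x' -> le y y' -> le (join x y) (join x' y').
Proof.
move=> h1 h2; apply: jlub; [apply: ltrans h1 (jubl _ _)|apply: ltrans h2 (jubr _ _)].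
Qed.
Lemma jD x y z : join x y + z = join (x + z) (y + z).
Proof.
apply: lanti.
  apply/lsubr; apply: jlub; apply/lsubr; [exact: jubl|exact: jubr].
by apply: jlub; apply: lD; [exact: jubl|exact: jubr].
Qed.
Lemma jZ (c : R) x y : 0 < c -> join (c *: x) (c *: y) = c *: join x y.
Proof.
move=> c0; have c0' := ltW c0; apply: lanti.
  by apply: jlub; apply: lZ => //; [exact: jubl|exact: jubr].
have -> : join (c *: x) (c *: y) = c *: (c^-1 *: join (c *: x) (c *: y)).
  by rewrite scalerA divff ?scale1r // gt_eqF.
apply: lZ => //; apply: jlub.
  have {1}-> : x = c^-1 *: (c *: x) by rewrite scalerA mulVf ?scale1r // gt_eqF.
  by apply: lZ; [rewrite invr_ge0|exact: jubl].
have {1}-> : y = c^-1 *: (c *: y) by rewrite scalerA mulVf ?scale1r // gt_eqF.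
by apply: lZ; [rewrite invr_ge0|exact: jubr].
Qed.

Notation meet := (meet join).
Notation labs := (labs join).

Lemma mlbl x y : le (meet x y) x.
Proof. by apply: lNK; rewrite /Defs.meet opprK; exact: jubl. Qed.
Lemma mlbr x y : le (meet x y) y.
Proof. by apply: lNK; rewrite /Defs.meet opprK; exact: jubr. Qed.
Lemma mglb x y z : le z x -> le z y -> le z (meet x y).
Proof.
move=> h1 h2; apply: lNK; rewrite /Defs.meet opprK.
by apply: jlub; apply: lN.
Qed.
Lemma mC x y : meet x y = meet y x.
Proof. by rewrite /Defs.meet jC. Qed.
Lemma mmono x x' y y' : le x x' -> le y y' -> le (meet x y) (meet x' y').
Proof.
move=> h1 h2; apply: mglb; [apply: ltrans (mlbl _ _) h1|apply: ltrans (mlbr _ _) h2].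
Qed.
Lemma mD x y z : meet x y + z = meet (x + z) (y + z).
Proof.
by rewrite /Defs.meet !opprD -jD opprD opprK.
Qed.
Lemma mZ (c : R) x y : 0 < c -> meet (c *: x) (c *: y) = c *: meet x y.
Proof. by move=> c0; rewrite /Defs.meet -!scalerN jZ // scalerN. Qed.
Lemma m0 x y : le 0 x -> le 0 y -> le 0 (meet x y).
Proof. exact: mglb. Qed.
Lemma mid x : meet x x = x.
Proof. by apply: lanti; [exact: mlbl|apply: mglb; exact: lrefl]. Qed.
Lemma m_0 x : le 0 x -> meet x 0 = 0.
Proof. by move=> h; apply: lanti; [exact: mlbr|apply: mglb => //; exact: lrefl]. Qed.

Lemma labs_ge x : le x (labs x).
Proof. exact: jubl. Qed.
Lemma labs_geN x : le (- x) (labs x).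
Proof. exact: jubr. Qed.
Lemma labs_ge0 x : le 0 (labs x).
Proof.
have h : le (x + - x) (labs x + labs x) by apply: lD2; [exact: labs_ge|exact: labs_geN].
rewrite addrN -mulr2n -scaler_nat in h.
have h2 : (0:R) <= 2^-1 by rewrite invr_ge0 ler0n.
have := lZ h2 h.
by rewrite scaler0 scalerA mulVf ?scale1r // pnatr_eq0.
Qed.
Lemma labs_pos x : le 0 x -> labs x = x.
Proof.
move=> h; apply: lanti; last exact: labs_ge.
apply: jlub; first exact: lrefl.
apply: ltrans (lN h) _; rewrite oppr0 //.
Qed.
Lemma labs0 : labs 0 = 0.
Proof. by apply: labs_pos; exact: lrefl. Qed.
Lemma subm x t : x - meet x t = join 0 (x - t).
Proof. by rewrite /Defs.meet opprK addrC jD addNr [- t + x]addrC. Qed.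
Lemma posneg v : meet (join v 0) (join (- v) 0) = 0.
Proof.
have h : join v 0 - join (- v) 0 = v.
  apply/eqP; by rewrite subr_eq addrC jD addNr add0r jC.
have := subm (join v 0) (join (- v) 0); rewrite h jC => /eqP.
by rewrite subr_eq addrC -subr_eq subrr => /eqP <-.
Qed.
End Lat.


Section Band.
Variables (R : realType) (E : completeNormedModType R).
Variables (le : E -> E -> Prop) (join : E -> E -> E).
Hypothesis hVL : is_vector_lattice le join.
Notation meet := (meet join).
Notation labs := (labs join).
Notation lrefl := (lrefl hVL). Notation lanti := (lanti hVL). Notation ltrans := (ltrans hVL).
Notation lD := (lD hVL). Notation lDl := (lDl hVL). Notation lD2 := (lD2 hVL). Notation lN := (lN hVL).
Notation lNK := (lNK hVL). Notation lsub := (lsub hVL). Notation lsubr := (lsubr hVL). Notation lZ := (lZ hVL).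
Notation lZ0 := (lZ0 hVL). Notation lZr := (lZr hVL). Notation jubl := (jubl hVL). Notation jubr := (jubr hVL).
Notation jlub := (jlub hVL). Notation jC := (jC hVL). Notation jmono := (jmono hVL). Notation jD := (jD hVL).
Notation mlbl := (mlbl hVL). Notation mlbr := (mlbr hVL). Notation mglb := (mglb hVL). Notation mC := (mC hVL).
Notation mmono := (mmono hVL). Notation mD := (mD hVL). Notation mZ := (mZ hVL). Notation m0 := (m0 hVL).
Notation mid := (mid hVL). Notation m_0 := (m_0 hVL). Notation labs_ge := (labs_ge hVL).
Notation labs_geN := (labs_geN hVL). Notation labs_ge0 := (labs_ge0 hVL). Notation labs_pos := (labs_pos hVL).
Notation labs0 := (labs0 hVL). Notation subm := (subm hVL). Notation posneg := (posneg hVL).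

Lemma disj_scale (c : R) a b : 0 <= c -> le 0 a -> le 0 b -> meet a b = 0 ->
  meet (c *: a) b = 0.
Proof.
move=> c0 a0 b0 ab; apply: lanti; last by apply: m0 => //; exact: lZ0.
have M0 : 0 < c + 1 by rewrite ltr_wpDl.
suff : le (meet (c *: a) b) (meet ((c + 1) *: a) ((c + 1) *: b)).
  by rewrite mZ // ab scaler0.
apply: mmono; first by apply: lZr; rewrite ?lerDl.
by rewrite -{1}(scale1r b); apply: lZr; rewrite ?lerDr.
Qed.

Lemma riesz t A B : le 0 t -> le 0 A -> le 0 B ->
  le (meet t (A + B)) (meet t A + meet t B).
Proof.
move=> t0 A0 B0; rewrite mD; set L := meet t (A + B); set m := meet t B.
have m0' : le 0 m by exact: m0.
apply: mglb.
  apply: ltrans (mlbl _ _) _; rewrite -{1}(addr0 t); exact: lDl.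
have h : le (L - A) m.
  apply: mglb.
    apply: ltrans (lD _ (mlbl _ _)) _; rewrite -{2}(addr0 t); apply: lDl.
    by rewrite -oppr0; apply: lN.
  by have := lD (- A) (mlbr t (A + B)); rewrite addrAC addrN add0r.
by have := lD A h; rewrite addrNK addrC.
Qed.

Lemma disj_sum t X Y (c : R) : le 0 t -> le 0 X -> le 0 Y -> 0 <= c ->
  meet t X = 0 -> meet t Y = 0 -> meet t (c *: X + Y) = 0.
Proof.
move=> t0 X0 Y0 c0 tX tY; apply: lanti; last first.
  by apply: m0 => //; rewrite -(addr0 0); apply: lD2 => //; exact: lZ0.
apply: ltrans (riesz t0 (lZ0 c0 X0) Y0) _.
rewrite tY addr0 (mC t) disj_scale //; first exact: lrefl. by rewrite (mC X).
Qed.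

Lemma labs_lin (a : R) x y : le (labs (a *: x + y)) (`|a| *: labs x + labs y).
Proof.
have [h1 h2] : le (a *: x) (`|a| *: labs x) /\ le (- (a *: x)) (`|a| *: labs x).
  have [a0|a0] := leP 0 a.
    rewrite ger0_norm //; split; first by apply: lZ => //; exact: labs_ge.
    by rewrite -scalerN; apply: lZ => //; exact: labs_geN.
  rewrite ltr0_norm //; split.
    by rewrite -[a *: x]opprK -scalerN -scaleNr; apply: lZ; rewrite ?oppr_ge0 ?ltW //; exact: labs_geN.
  by rewrite -scaleNr; apply: lZ; rewrite ?oppr_ge0 ?ltW //; exact: labs_ge.
apply: jlub; first by apply: lD2 => //; exact: labs_ge.
by rewrite opprD; apply: lD2 => //; exact: labs_geN.
Qed.

Variable (e : E).
Hypothesis he : weak_order_unit le join e.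

Definition Bd (v : E) := forall t, le 0 t -> meet t e = 0 -> meet t (labs v) = 0.

Lemma Bd_band : is_band le join Bd.
Proof.
case: he => e0 [en0 _].
split.
- by move=> t t0 _; rewrite labs0 m_0.
- move=> a x y Bx By t t0 te; apply: lanti; last by apply: m0 => //; exact: labs_ge0.
  rewrite -(disj_sum (c := `|a|) t0 (labs_ge0 x) (labs_ge0 y) _ (Bx t t0 te) (By t t0 te)) //.
  by apply: mmono; [exact: lrefl|exact: labs_lin].
- move=> x y yx Bx t t0 te; apply: lanti; last by apply: m0 => //; exact: labs_ge0.
  by rewrite -(Bx t t0 te); apply: mmono => //; exact: lrefl.
- move=> D s DB [sup1 sup2] t t0 te.
  have [[d0 Dd0]|nD] := pselect (exists d, D d); last first.
    exfalso; apply: en0; apply: lanti => //.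
    have : le s (s - e) by apply: sup2 => d Dd; exfalso; apply: nD; exists d.
    move=> H; have := proj1 (lsub s (s - e)) H.
    rewrite addrAC addrN add0r => H2; apply: lNK; rewrite oppr0; exact: H2.
  set sp := join s 0; set sn := join (- s) 0.
  have sp0 : le 0 sp by exact: jubr.
  have sn0 : le 0 sn by exact: jubr.
  have hsn : meet t sn = 0.
    apply: lanti; last exact: m0.
    rewrite -(DB _ Dd0 t t0 te); apply: mmono; first exact: lrefl.
    apply: jlub; last exact: labs_ge0.
    apply: ltrans (labs_geN d0); apply: lN; exact: sup1.
  have hsp : meet t sp = 0.
    rewrite mC; set c := meet sp t.
    have c0 : le 0 c by exact: m0.
    have hd : forall d, D d -> le d (sp - c).
      move=> d Dd; set dp := join d 0.
      have dpt : meet dp t = 0.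
        apply: lanti; last by apply: m0 => //; exact: jubr.
        rewrite -(DB _ Dd t t0 te) mC; apply: mmono; first exact: lrefl.
        apply: jlub; [exact: labs_ge|exact: labs_ge0].
      apply: ltrans (jubl d 0) _; rewrite -/dp.
      have -> : dp = dp - meet dp t by rewrite dpt subr0.
      rewrite subm /c subm; apply: jmono; first exact: lrefl.
      by apply: lD; apply: jmono; [exact: sup1|exact: lrefl].
    have hs := sup2 _ hd.
    have hsp' : le sp (sp - c).
      apply: jlub => //; exact: proj1 (lsub c sp) (mlbl sp t).
    move/lsubr: hsp' => hsp'; have := lD (- sp) hsp'.
    by rewrite addrN [sp + c]addrC addrK => H; apply: lanti.
  apply: lanti; last by apply: m0 => //; exact: labs_ge0.
  apply: (ltrans (y := meet t (sp + sn))); last first.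
    by apply: ltrans (riesz t0 sp0 sn0) _; rewrite hsp hsn addr0; exact: lrefl.
  apply: mmono; first exact: lrefl.
  apply: jlub.
    apply: ltrans (jubl s 0) _; rewrite -/sp -{1}(addr0 sp); exact: lDl.
  apply: ltrans (jubl (- s) 0) _; rewrite -/sn -{1}(add0r sn); exact: lD.
Qed.

Lemma Bd_e : Bd e.
Proof. by case: he => e0 _ t _ te; rewrite labs_pos. Qed.

Hypothesis hArch : is_archimedean le.

Lemma inf_cn u : le 0 u -> forall z, (forall n : nat, le z (join (u - n%:R *: e) 0)) -> le z 0.
Proof.
case: he => e0 [en0 hB] u0 z hz.
set w := join z 0.
have w0 : le 0 w by exact: jubr.
have wc n : le w (join (u - n%:R *: e) 0) by apply: jlub; [exact: hz|exact: jubr].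
have wA n : meet w (join (n%:R *: e - u) 0) = 0.
  apply: lanti; last by apply: m0 => //; exact: jubr.
  apply: ltrans (mmono (wc n) (lrefl _)) _.
  by have := posneg (u - n%:R *: e); rewrite opprB => ->; exact: lrefl.
have we : meet w e = 0.
  apply: hArch (u) (m0 w0 e0) _ => n.
  have [->|n0] := eqVneq n 0%N; first by rewrite scale0r.
  have n0' : (0 : R) < n%:R by rewrite ltr0n lt0n.
  rewrite -mZ //; set A := join (n%:R *: e - u) 0.
  have h1 : le (n%:R *: e) (A + u).
    have {1}-> : n%:R *: e = (n%:R *: e - u) + u by rewrite addrNK.
    apply: lD; exact: jubl.
  apply: ltrans (mmono (lrefl _) h1) _.
  have -> : n%:R *: w = (n%:R *: w - u) + u by rewrite addrNK.
  rewrite -mD -[X in le _ X](add0r u); apply: lD.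
  rewrite -(disj_scale (c := n%:R) _ w0 (jubr _ _) (wA n)) ?ler0n //.
  apply: mmono; last exact: lrefl.
  rewrite -{2}(subr0 (n%:R *: w)); apply: lDl; apply: lN; exact: u0.
have Bw := hB _ Bd_band Bd_e w.
have := Bw w w0 we; rewrite labs_pos // mid => wz.
by apply: ltrans (jubl z 0) _; rewrite -/w wz; exact: lrefl.
Qed.
End Band.


Section HBan.
Local Open Scope classical_set_scope.
Variables (R : realType) (V : lmodType R) (p : V -> R).
Hypothesis psub : forall x y, p (x + y) <= p x + p y.
Hypothesis phom : forall (t : R) x, 0 < t -> p (t *: x) = t * p x.
Variables (w : V) (f0 : R).
Hypothesis wn0 : w != 0.
Hypothesis hw : forall t : R, t * f0 <= p (t *: w).

Definition glin (G : set (V * R)) := forall (k : R) z1 z2, G z1 -> G z2 ->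
  G (k *: z1.1 + z2.1, k * z1.2 + z2.2).
Definition gfun (G : set (V * R)) := forall x a b, G (x, a) -> G (x, b) -> a = b.
Definition gdom (G : set (V * R)) := forall x a, G (x, a) -> a <= p x.
Definition gP (G : set (V * R)) :=
  [/\ glin G, gfun G, gdom G & forall z, G z -> G (w, f0)].

Lemma gP_chain (F : set (set (V * R))) : F `<=` gP -> total_on F subset ->
  gP (\bigcup_(X in F) X).
Proof.
move=> FP tot; split.
- move=> k z1 z2 [X1 FX1 X1z] [X2 FX2 X2z].
  have [s12|s21] := tot _ _ FX1 FX2.
    exists X2 => //; case: (FP _ FX2) => L _ _ _; apply: L => //; exact: s12.
  exists X1 => //; case: (FP _ FX1) => L _ _ _; apply: L => //; exact: s21.
- move=> x a b [X1 FX1 X1z] [X2 FX2 X2z].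
  have [s12|s21] := tot _ _ FX1 FX2.
    by case: (FP _ FX2) => _ Fu _ _; exact: (Fu x a b (s12 _ X1z) X2z).
  by case: (FP _ FX1) => _ Fu _ _; exact: (Fu x a b X1z (s21 _ X2z)).
- by move=> x a [X FX Xz]; case: (FP _ FX) => _ _ D _; exact: D.
- by move=> z [X FX Xz]; exists X => //; case: (FP _ FX) => _ _ _ W; exact: W Xz.
Qed.

Lemma extend (A : set (V * R)) : gP A -> forall x0, ~ (exists a, A (x0, a)) ->
  exists B, gP B /\ A `<` B.
Proof.
case=> Al Af Ad Aw x0 nx0.
have A00 : forall z, A z -> A (0, 0).
  move=> z Az; have := Al (-1) _ _ Az Az.
  by rewrite scaleN1r mulN1r !addNr.
set S := [set r | exists y a, A (y, a) /\ r = a - p (y - x0)].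
have key : forall y a z b, A (y, a) -> A (z, b) -> a - p (y - x0) <= p (z + x0) - b.
  move=> y a z b Aya Azb.
  suff : a + b <= p (y - x0) + p (z + x0) by move=> ?; lra.
  have := Ad _ _ (Al 1 _ _ Aya Azb); rewrite /= scale1r mul1r => h.
  apply: le_trans h _.
  by rewrite (_ : y + z = (y - x0) + (z + x0)) ?psub // addrACA addNr addr0.
set c := sup S.
case: (pselect (exists z, A z)) => [[z0 Az0]|nA]; last first.
  exists [set z | exists t : R, z = (t *: w, t * f0)]; split.
    split.
    - move=> k z1 z2 /= [t1 ->] [t2 ->]; exists (k * t1 + t2).
      by rewrite /= scalerDl scalerA mulrDl mulrA.
    - move=> x a b /= [t1 [-> ->]] [t2 [e1 ->]].
      move/eqP: e1; rewrite -subr_eq0 -scalerBl scaler_eq0 (negbTE wn0) orbF subr_eq0.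
      by move/eqP ->.
    - by move=> x a /= [t [-> ->]]; exact: hw.
    - by move=> z _; exists 1; rewrite scale1r mul1r.
  split; first by move=> z Az; exfalso; apply: nA; exists z.
  by move=> h; apply: nA; exists (w, f0); apply: h; exists 1; rewrite scale1r mul1r.
have A0 := A00 _ Az0.
have Sne : S !=set0 by exists (0 - p (0 - x0)), 0, 0.
have Sub : has_ubound S.
  exists (p (0 + x0) - 0) => r [y [a [Aya ->]]]; exact: key.
have c_ub : forall y a, A (y, a) -> a - p (y - x0) <= c.
  by move=> y a Aya; apply: ub_le_sup => //; exists y, a.
have c_lb : forall z b, A (z, b) -> c <= p (z + x0) - b.
  by move=> z b Azb; apply: ge_sup => // r [y [a [Aya ->]]]; exact: key.
set B := [set z | exists y a (t : R), A (y, a) /\ z = (y + t *: x0, a + t * c)].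
exists B; split.
  split.
  - move=> k _ _ [y1 [a1 [t1 [A1 ->]]]] [y2 [a2 [t2 [A2 ->]]]].
    exists (k *: y1 + y2), (k * a1 + a2), (k * t1 + t2); split; first exact: Al A1 A2.
    congr (_, _); rewrite /=.
      by rewrite scalerDr scalerDl scalerA; rewrite addrACA.
    by rewrite mulrDr mulrDl mulrA addrACA.
  - move=> x a b [y1 [a1 [t1 [A1 [e1 ->]]]]] [y2 [a2 [t2 [A2 [e2 ->]]]]].
    have [t12|t12] := eqVneq t1 t2.
      subst t2; move: e2; rewrite e1 => /addIr e; subst y2.
      by rewrite (Af _ _ _ A1 A2).
    exfalso; apply: nx0; exists ((t1 - t2)^-1 * (a2 - a1)).
    have h : (t1 - t2)^-1 *: (y2 - y1) = x0.
      apply: (@scalerI _ _ (t1 - t2)); first by rewrite subr_eq0.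
      rewrite scalerA divff ?subr_eq0 // scale1r scalerBl.
      have E : y1 + t1 *: x0 = y2 + t2 *: x0 by rewrite -e1 -e2.
      have Ey2 : y2 = y1 + t1 *: x0 - t2 *: x0 by rewrite E addrK.
      by rewrite Ey2 addrAC [y1 + _]addrC addrK.
    rewrite -h; have := Al ((t1 - t2)^-1) _ _ (Al (-1) _ _ A1 A2) A0.
    by rewrite /= scaleN1r mulN1r !addr0 [- y1 + _]addrC [- a1 + _]addrC.
  - move=> x a [y [a1 [t [Aya [-> ->]]]]].
    have [t0|t0|->] := ltgtP t 0; last by rewrite scale0r mul0r !addr0; exact: Ad.
      set s := - t; have s0 : 0 < s by rewrite oppr_gt0.
      have := Al (s^-1) _ _ Aya A0; rewrite /= !addr0 => As.
      have := c_ub _ _ As; rewrite -(ler_pM2l s0) mulrBr mulrA divff ?gt_eqF //.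
      rewrite mul1r -phom // scalerBr scalerA divff ?gt_eqF // scale1r.
      rewrite /s scaleNr mulNr opprK => h; lra.
    have := Al (t^-1) _ _ Aya A0; rewrite /= !addr0 => At.
    have := c_lb _ _ At; rewrite -(ler_pM2l t0) mulrBr mulrA divff ?gt_eqF //.
    rewrite mul1r -phom // scalerDr scalerA divff ?gt_eqF // scale1r.
    move=> h; lra.
  - by move=> _ _; exists w, f0, 0; split; rewrite ?scale0r ?mul0r ?addr0 //; exact: Aw Az0.
split.
  by move=> [y a] Aya; exists y, a, 0; split; rewrite ?scale0r ?mul0r ?addr0.
move=> h; apply: nx0; exists (0 + 1 * c).
have : B (0 + 1 *: x0, 0 + 1 * c) by exists 0, 0, 1.
by rewrite scale1r add0r => /h.
Qed.

Theorem hahn_banach : exists f : V -> R,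
  [/\ (forall (a : R) x y, f (a *: x + y) = a * f x + f y),
      (forall x, f x <= p x) & f w = f0].
Proof.
have [A [PA Amax]] := Zorn_bigcup gP_chain.
have tot : forall x, exists a, A (x, a).
  move=> x; apply: contrapT => nx.
  have [B [PB AB]] := extend PA nx.
  exact: Amax _ AB PB.
have [f hf] := choice tot.
case: PA => Al Af Ad Aw.
exists f; split.
- move=> a x y; apply: Af (hf _) _.
  by have := Al a _ _ (hf x) (hf y).
- by move=> x; exact: Ad (hf x).
- by apply: Af (hf w) _; exact: Aw (hf w).
Qed.
End HBan.


Section Main.
Variables (R : realType) (E : completeNormedModType R).
Variables (le : E -> E -> Prop) (join : E -> E -> E) (mul : E -> E -> E).
Hypothesis hVL : is_vector_lattice le join.
Hypothesis hF : is_f_algebra le join mul.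
Hypothesis hN : forall x y, le (labs join x) (labs join y) -> `|x| <= `|y|.
Hypothesis hM : forall x y, `|mul x y| <= `|x| * `|y|.

Lemma mulDlZ (a : R) x y z : mul (a *: x + y) z = a *: mul x z + mul y z.
Proof. by case: hF => _ H _ _ _; apply: H. Qed.
Lemma mulDrZ (a : R) x y z : mul z (a *: x + y) = a *: mul z x + mul z y.
Proof. by case: hF => _ _ H _ _; apply: H. Qed.
Lemma mulpos x y : le 0 x -> le 0 y -> le 0 (mul x y).
Proof. by case: hF => _ _ _ H _; apply: H. Qed.
Lemma mul0l z : mul 0 z = 0.
Proof.
have := mulDlZ 1 0 0 z; rewrite !scale1r addr0 => /eqP.
by rewrite -subr_eq0 opprD addrA subrr add0r oppr_eq0 => /eqP.
Qed.
Lemma mul0r z : mul z 0 = 0.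
Proof.
have := mulDrZ 1 0 0 z; rewrite !scale1r addr0 => /eqP.
by rewrite -subr_eq0 opprD addrA subrr add0r oppr_eq0 => /eqP.
Qed.
Lemma mulZr (a : R) x z : mul z (a *: x) = a *: mul z x.
Proof. by have := mulDrZ a x 0 z; rewrite addr0 mul0r addr0. Qed.
Lemma mulDr x y z : mul z (x + y) = mul z x + mul z y.
Proof. by have := mulDrZ 1 x y z; rewrite !scale1r. Qed.
Lemma mulBl x y z : mul (x - y) z = mul x z - mul y z.
Proof. by have := mulDlZ (-1) y x z; rewrite !scaleN1r addrC => ->; rewrite addrC. Qed.
Lemma mulBr x y z : mul z (x - y) = mul z x - mul z y.
Proof. by have := mulDrZ (-1) y x z; rewrite !scaleN1r addrC => ->; rewrite addrC. Qed.
Lemma mul_monol x y z : le 0 z -> le x y -> le (mul x z) (mul y z).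
Proof.
move=> z0 /(lsub hVL) h; apply/(lsub hVL); rewrite -mulBl; exact: mulpos.
Qed.
Lemma mul_monor x y z : le 0 z -> le x y -> le (mul z x) (mul z y).
Proof.
move=> z0 /(lsub hVL) h; apply/(lsub hVL); rewrite -mulBr; exact: mulpos.
Qed.
Lemma nmono x y : le 0 x -> le x y -> `|x| <= `|y|.
Proof.
move=> x0 xy; apply: hN; by rewrite (labs_pos hVL x0) (labs_pos hVL (ltrans hVL x0 xy)).
Qed.

Definition pp (v : E) : R := `|join v 0|.

Lemma pp_sub x y : pp (x + y) <= pp x + pp y.
Proof.
rewrite /pp; apply: le_trans _ (ler_normD _ _).
apply: nmono; first exact: (jubr hVL).
apply: (jlub hVL); first by exact: (lD2 hVL (jubl hVL _ _) (jubl hVL _ _)).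
by rewrite -[X in le X _](addr0 0); exact: (lD2 hVL (jubr hVL _ _) (jubr hVL _ _)).
Qed.
Lemma pp_hom (t : R) x : 0 < t -> pp (t *: x) = t * pp x.
Proof.
move=> t0; rewrite /pp -{1}(scaler0 _ t) (jZ hVL) // normrZ gtr0_norm //.
Qed.
Lemma pp_le v : pp v <= `|v|.
Proof.
apply: hN; rewrite (labs_pos hVL); last exact: (jubr hVL).
apply: (jlub hVL); [exact: (labs_ge hVL)|exact: (labs_ge0 hVL)].
Qed.
Lemma ppN_le v : pp (- v) <= `|v|.
Proof.
apply: hN; rewrite (labs_pos hVL); last exact: (jubr hVL).
apply: (jlub hVL); [exact: (labs_geN hVL)|exact: (labs_ge0 hVL)].
Qed.

Definition linf (f : E -> R) := forall (a : R) (y z : E), f (a *: y + z) = a * f y + f z.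

Lemma linf0 f : linf f -> f 0 = 0.
Proof.
move=> hf; have := hf 1 0 0; rewrite scale1r addr0 mul1r => /eqP.
by rewrite -subr_eq0 opprD addrA subrr add0r oppr_eq0 => /eqP.
Qed.
Lemma linfN f v : linf f -> f (- v) = - f v.
Proof. by move=> hf; have := hf (-1) v 0; rewrite addr0 scaleN1r linf0 // addr0 mulN1r. Qed.
Lemma linfB f x y : linf f -> f (x - y) = f x - f y.
Proof. by move=> hf; have := hf (-1) y x; rewrite scaleN1r mulN1r addrC => ->; rewrite addrC. Qed.

Lemma cont_small f : linf f -> continuous f ->
  forall eps : R, 0 < eps -> exists2 d : R, 0 < d & forall v, `|v| < d -> `|f v| < eps.
Proof.
move=> hl hc eps eps0.
have := hc (0:E); move=> /cvgrPdist_lt /(_ eps eps0); rewrite linf0 //.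
move=> /nbhs_norm0P [d d0 hd]; exists d => // v vd.
by have := hd v vd; rewrite /= sub0r normrN.
Qed.

Lemma hb_pos (w : E) : le 0 w -> w != 0 -> exists f : E -> R,
  [/\ linf f, continuous f, f w = `|w| & forall v, le 0 v -> 0 <= f v].
Proof.
move=> w0 wn0.
have hw : forall t : R, t * `|w| <= pp (t *: w).
  move=> t; have [t0|t0] := ltP 0 t.
    rewrite /pp (_ : join (t *: w) 0 = t *: w) ?normrZ ?gtr0_norm //.
    apply: (lanti hVL) (jubl hVL _ _); apply: (jlub hVL); first exact: (lrefl hVL).
    exact: (lZ0 hVL (ltW t0) w0).
  apply: le_trans (normr_ge0 _); exact: mulr_le0_ge0.
have [f [fl fp fw]] := hahn_banach pp_sub pp_hom wn0 hw.
have fle v : `|f v| <= `|v|.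
  rewrite ler_norml; apply/andP; split; last by apply: le_trans (fp v) (pp_le v).
  by rewrite lerNl -linfN //; apply: le_trans (fp _) (ppN_le v).
exists f; split => //.
- move=> x; apply/cvgrPdist_lt => eps eps0.
  apply/nbhs_normP; exists eps => // t /= h.
  rewrite -linfB //; apply: le_lt_trans (fle _) _; exact: h.
- move=> v v0; rewrite -[f v]opprK -linfN // oppr_ge0.
  apply: le_trans (fp _) _; rewrite /pp.
  rewrite (_ : join (- v) 0 = 0) ?normr0 //.
  apply: (lanti hVL) (jubr hVL _ _); apply: (jlub hVL); last exact: (lrefl hVL).
  by rewrite -oppr0; apply: (lN hVL).
Qed.
End Main.

Unset Implicit Arguments.


Theorem corollary2p10 (R : realType) (E : completeNormedModType R)
  (le : E -> E -> Prop) (join : E -> E -> E) (mul : E -> E -> E)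
  (hE : BanachFAlgebra le join mul)
  (hoc : order_continuous_norm le)
  (e : E) (he : weak_order_unit le join e)
  (A : Type) (leA : A -> A -> Prop) (hA : directed leA)
  (x : A -> E) (hpos : forall a, le 0 (x a)) (hdec : decreasing_net le leA x) :
  mw_cvg le join mul leA x 0 <-> weak_cvg leA (fun a => mul (x a) e) 0.
Proof.
case: hE => hVL hArch hF hN hM.
have e0 : le 0 e := he.1.
case: hA => hinh hrefl htrans hdir.
have hfun : forall u (g : E -> R), net_cvg leA (fun i => g (mul (x i) u)) (g 0) ->
    net_cvg leA (fun i => g (mul (labs join (x i - 0)) u)) (g 0).
  move=> u g h eps eps0; have [a0 ha] := h eps eps0; exists a0 => a ha'.
  by rewrite subr0 (labs_pos hVL (hpos a)); exact: ha.
split.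
  move=> hmw g gl gc eps eps0; have [a0 ha] := hmw e e0 g gl gc eps eps0.
  exists a0 => a ha'; have := ha a ha'.
  by rewrite subr0 (labs_pos hVL (hpos a)).
move=> hw u u0 g gl gc; apply: hfun; move: g gl gc.
set y := fun a => mul (x a) e.
have y0 a : le 0 (y a) by exact: (mulpos hF (hpos a) e0).
have yinf : forall z, (forall a, le z (y a)) -> le z 0.
  move=> z hz; set w := join z 0.
  have wy a : le w (y a) by exact: (jlub hVL (hz a) (y0 a)).
  suff w_0 : w = 0 by rewrite -w_0; exact: (jubl hVL).
  apply: contrapT => /eqP wn0.
  have w0 : le 0 w by exact: (jubr hVL).
  have [f [fl fc fw fpos]] := hb_pos hVL hN w0 wn0.
  have [a0 ha0] := hw f fl fc `|w| ltac:(by rewrite normr_gt0).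
  have := ha0 a0 (hrefl a0); rewrite (linf0 fl) subr0.
  have h1 : `|w| <= f (y a0).
    rewrite -fw -subr_ge0 -(linfB _ _ fl); apply: fpos.
    exact: (proj1 (lsub hVL _ _) (wy a0)).
  move=> h2; have := lt_le_trans h2 (le_trans h1 (ler_norm _)).
  by rewrite ltxx.
have ycvg : net_cvg leA (fun a => `|y a|) 0.
  apply: hoc; first by split.
  split; [|split] => //.
  move=> a b hab; exact: (mul_monol hVL hF e0 (hdec a b hab)).
set c := fun n : nat => join (u - n%:R *: e) 0.
have ccvg : net_cvg (fun m n : nat => (m <= n)%N) (fun n => `|c n|) 0.
  apply: hoc.
    split.
    - exact: inhabits 0%N.
    - exact: leqnn.
    - move=> ? ? ?; exact: leq_trans.
    - by move=> m n; exists (maxn m n); rewrite leq_maxl leq_maxr.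
  split; [|split].
  - move=> m n mn; apply: (jmono hVL) (lrefl hVL 0); apply: (lDl hVL); apply: (lN hVL).
    by apply: (lZr hVL) => //; rewrite ler_nat.
  - move=> n; exact: (jubr hVL).
  - exact: (inf_cn hVL he hArch u0).
move=> g gl gc eps eps0.
rewrite (linf0 gl).
have [d d0 hd] := cont_small gl gc eps0.
case: hinh => b0.
set K := `|x b0|.
have K0 : 0 <= K by exact: normr_ge0.
have [N hN'] := ccvg (d / (2 * (K + 1))) ltac:(by rewrite divr_gt0 // mulr_gt0 // ltr_wpDl).
have N0 : (0 : R) <= N%:R by exact: ler0n.
have [a1 ha1] := ycvg (d / (2 * (N%:R + 1))) ltac:(by rewrite divr_gt0 // mulr_gt0 // ltr_wpDl).
have [a2 [h02 h12]] := hdir b0 a1.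
exists a2 => a ha.
rewrite subr0; apply: hd.
have hb0a : leA b0 a := htrans _ _ _ h02 ha.
have h1a : leA a1 a := htrans _ _ _ h12 ha.
have cN := hN' N (leqnn N); rewrite subr0 normr_id in cN.
have yN := ha1 a h1a; rewrite subr0 normr_id in yN.
set m := u - c N.
have cN0 : le 0 (c N) by exact: (jubr hVL).
have -> : u = m + c N by rewrite subrK.
rewrite (mulDr hF).
apply: le_lt_trans (ler_normD _ _) _.
have t1 : `|mul (x a) m| <= N%:R * `|y a|.
  rewrite -(ger0_norm N0) -normrZ -(mulZr hF).
  apply: (nmono hVL hN).
    apply: (mulpos hF) (hpos a) _; apply: (proj1 (lsub hVL _ _)).
    apply: (jlub hVL) u0; rewrite -{2}(subr0 u); apply: (lDl hVL); apply: (lN hVL).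
    exact: (lZ0 hVL N0 e0).
  apply: (mul_monor hVL hF) (hpos a) _.
  have h := proj1 (lsub hVL _ _) (jubl hVL (u - N%:R *: e) 0).
  apply: (proj2 (lsub hVL _ _)); rewrite -/(c N) in h.
  suff -> : N%:R *: e - m = c N - (u - N%:R *: e) by [].
  by rewrite /m !opprB !addrA (addrC (c N)).
have t2 : `|mul (x a) (c N)| <= K * `|c N|.
  apply: le_trans (hM _ _) _; apply: ler_wpM2r; first exact: normr_ge0.
  exact: (nmono hVL hN (hpos a) (hdec _ _ hb0a)).
have hy2 : (N%:R + 1) * `|y a| < d / 2.
  have -> : d / 2 = (N%:R + 1) * (d / (2 * (N%:R + 1))).
    by field; rewrite ?lt0r_neq0 // ltr_wpDl.
  by rewrite ltr_pM2l // ltr_wpDl.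
have hc2 : (K + 1) * `|c N| < d / 2.
  have -> : d / 2 = (K + 1) * (d / (2 * (K + 1))).
    by field; rewrite ?lt0r_neq0 // ltr_wpDl.
  by rewrite ltr_pM2l // ltr_wpDl.
have := normr_ge0 (y a); have := normr_ge0 (c N).
rewrite /y in t1 hy2 *.
nra.
Qed.
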